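(* Let $V:\mathbb{R}\to\mathbb{R}$ be convex and $L$-Lipschitz with $m:=e^{-V}$ a probability density, and let $C_V>0$ be a constant such that for all $x\in\mathbb{R}$, $C_V^{-1}\le e^{-V(x)}\big/\min\big(\int_{-\infty}^x e^{-V},\int_x^\infty e^{-V}\big)\le C_V$. Let $0<c<C$ and $f\in\mathcal{P}_{c,C}$. Then the optimal transport map $T$ from $m$ to $f$ satisfies $$\frac{c}{C C_V^2}\le T'\le\frac{C C_V^2}{c}.$$
   Context: $\mathcal{P}_{c,C}:=\{g\in\mathcal{P}(\mathbb{R}):\ c\,m\le g\le C\,m\}$. The optimal transport map (for quadratic cost) from $m$ to $f$ on $\mathbb{R}$ is the monotone map $T=F_f^{-1}\circ F_m$, where $F_m,F_f$ are the cumulative distribution functions. *)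

(* Defs.v *)
From HB Require Import structures.
From mathcomp Require Import all_boot all_order all_algebra.
From mathcomp Require Import all_classical all_reals all_analysis.
Set Implicit Arguments. Unset Strict Implicit. Unset Printing Implicit Defensive.
Import Order.TTheory GRing.Theory Num.Theory.
Import numFieldNormedType.Exports.
Local Open Scope classical_set_scope.
Local Open Scope ring_scope.

Definition is_prob_density (R : realType) (g : R -> R) : Prop :=
  [/\ measurable_fun setT g,
      (forall x, 0 <= g x) &
      (\int[lebesgue_measure]_x (g x)%:E = 1)%E].

Definition cdf_of (R : realType) (g : R -> R) (x : R) : R :=
  fine (\int[lebesgue_measure]_(t in `]-oo, x]) (g t)%:E).

Definition upper_tail (R : realType) (g : R -> R) (x : R) : R :=
  fine (\int[lebesgue_measure]_(t in `[x, +oo[) (g t)%:E).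

Definition Pcc (R : realType) (m : R -> R) (c C : R) (g : R -> R) : Prop :=
  is_prob_density g /\ (forall x, c * m x <= g x /\ g x <= C * m x).

Definition convex_fun (R : realType) (V : R -> R) : Prop :=
  forall x y t : R, 0 <= t <= 1 ->
    V (t * x + (1 - t) * y) <= t * V x + (1 - t) * V y.

Definition lipschitz_with (R : realType) (L : R) (V : R -> R) : Prop :=
  forall x y : R, `|V x - V y| <= L * `|x - y|.

(* Main.v *)
Require Import Defs.
From HB Require Import structures.
From mathcomp Require Import all_boot all_order all_algebra.
From mathcomp Require Import all_classical all_reals all_analysis.
From mathcomp Require Import measurable_realfun.
From mathcomp Require Import ring lra.
Import Order.TTheory GRing.Theory Num.Theory.
Import numFieldNormedType.Exports.
Local Open Scope classical_set_scope.
Local Open Scope ring_scope.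
Section Basics.
Context {R : realType}.
Local Notation mu := (@lebesgue_measure R).
Variable g : R -> R.
Hypothesis Hg : is_prob_density g.

Let mg : measurable_fun setT g. Proof. by case: Hg. Qed.
Let g0 : forall x, 0 <= g x. Proof. by case: Hg. Qed.
Let g1 : (\int[mu]_x (g x)%:E = 1)%E. Proof. by case: Hg. Qed.

Lemma mgE (A : set R) : measurable_fun A (EFin \o g).
Proof. by apply/measurable_EFinP; apply: measurable_funS mg. Qed.

Lemma int_bnd (A : set R) : measurable A ->
  (0 <= \int[mu]_(x in A) (g x)%:E <= 1)%E.
Proof.
move=> mA; apply/andP; split.
  by apply: integral_ge0 => x _; rewrite lee_fin.
rewrite -[X in (_ <= X)%E]g1; apply: ge0_subset_integral => //; first exact: mgE.
by move=> x _; rewrite lee_fin.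
Qed.

Lemma int_finnum (A : set R) : measurable A ->
  (\int[mu]_(x in A) (g x)%:E)%E \is a fin_num.
Proof.
move=> mA; have /andP[h0 h1] := int_bnd A mA.
by rewrite ge0_fin_numE // (le_lt_trans h1) // ltry.
Qed.

Lemma int_fin (A : set R) : measurable A ->
  (\int[mu]_(x in A) (g x)%:E = (fine (\int[mu]_(x in A) (g x)%:E))%:E)%E.
Proof.
move=> mA; have /andP[h0 h1] := int_bnd A mA.
by rewrite fineK // ge0_fin_numE // (le_lt_trans h1) // ltry.
Qed.

Lemma cdf_split a b : a <= b ->
  cdf_of g b = cdf_of g a + fine (\int[mu]_(x in `]a, b]) (g x)%:E)%E.
Proof.
move=> ab; rewrite /cdf_of.
rewrite (@itv_bndbnd_setU _ _ _ (BRight a)) //.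
rewrite ge0_integral_setU //; last 3 first.
- exact: mgE.
- by move=> x _; rewrite lee_fin.
- apply/disj_setPLR => x /=; rewrite !in_itv /= => xa.
  by rewrite ltNge xa.
by rewrite fineD // int_finnum.
Qed.

Lemma cdf_upper x : cdf_of g x + upper_tail g x = 1.
Proof.
rewrite /cdf_of /upper_tail -integral_itv_obnd_cbnd; last exact: mgE.
rewrite -fineD ?int_finnum //.
rewrite -ge0_integral_setU //; last 3 first.
- exact: mgE.
- by move=> t _; rewrite lee_fin.
- apply/disj_setPLR => t /=; rewrite !in_itv /= andbT => xa.
  by rewrite ltNge xa.
by rewrite itv_setU_setT g1.
Qed.
End Basics.
Section Bnds.
Context {R : realType}.
Local Notation mu := (@lebesgue_measure R).

Lemma mu_oc (a b : R) : a <= b -> mu `]a, b] = (b - a)%:E.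
Proof.
move=> ab; rewrite lebesgue_measure_itv /= lte_fin.
case: ltP => [_|ba]; first by rewrite EFinB.
have -> : b = a by apply/eqP; rewrite eq_le ab ba.
by rewrite subrr.
Qed.

Lemma itv_bounds (g : R -> R) (mg : measurable_fun setT g) (a b lo hi : R) :
  a <= b -> 0 <= lo -> (forall t, a < t <= b -> lo <= g t <= hi) ->
  lo * (b - a) <= fine (\int[mu]_(x in `]a, b]) (g x)%:E)%E <= hi * (b - a).
Proof.
move=> ab lo0 H.
have mgE : measurable_fun `]a, b] (EFin \o g).
  by apply/measurable_EFinP; apply: measurable_funS mg.
have I1 : ((lo * (b - a))%:E <= \int[mu]_(x in `]a, b]) (g x)%:E)%E.
  rewrite EFinM -mu_oc // -integral_cst //.
  apply: ge0_le_integral => //.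
  by move=> t /= /[!in_itv] /= /H /andP[h _]; rewrite lee_fin.
have I2 : (\int[mu]_(x in `]a, b]) (g x)%:E <= (hi * (b - a))%:E)%E.
  rewrite EFinM -mu_oc // -integral_cst //.
  apply: ge0_le_integral => //.
  - by move=> t /= /[!in_itv] /= /H /andP[h h']; rewrite lee_fin (le_trans lo0).
  - by move=> t /= /[!in_itv] /= /H /andP[h h']; rewrite lee_fin.
have Ifin : (\int[mu]_(x in `]a, b]) (g x)%:E)%E \is a fin_num.
  rewrite ge0_fin_numE; first by rewrite (le_lt_trans I2) // ltry.
  by rewrite (le_trans _ I1) // lee_fin mulr_ge0 // subr_ge0.
by rewrite -!lee_fin fineK // I1 I2.
Qed.
End Bnds.

Section Cmp.
Context {R : realType}.
Local Notation mu := (@lebesgue_measure R).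

Lemma cdf_ge0 (g : R -> R) : (forall x, 0 <= g x) -> forall x, 0 <= cdf_of g x.
Proof. by move=> g0 x; apply: fine_ge0; apply: integral_ge0 => t _; rewrite lee_fin. Qed.

Lemma upper_ge0 (g : R -> R) : (forall x, 0 <= g x) -> forall x, 0 <= upper_tail g x.
Proof. by move=> g0 x; apply: fine_ge0; apply: integral_ge0 => t _; rewrite lee_fin. Qed.

Lemma intZ (g : R -> R) (mg : measurable_fun setT g) (g0 : forall x, 0 <= g x)
  (k : R) (k0 : 0 <= k) (A : set R) (mA : measurable A) :
  (\int[mu]_(x in A) ((k * g x)%:E) = k%:E * \int[mu]_(x in A) (g x)%:E)%E.
Proof.
rewrite -ge0_integralZl_EFin //.
- by move=> x _; rewrite lee_fin.
- by apply/measurable_EFinP; apply: measurable_funS mg.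
Qed.

Lemma int_cmp (m f : R -> R) (c C : R) : is_prob_density m -> 0 < c -> c < C ->
  Pcc m c C f -> forall A : set R, measurable A ->
  c * fine (\int[mu]_(x in A) (m x)%:E)%E <= fine (\int[mu]_(x in A) (f x)%:E)%E
  <= C * fine (\int[mu]_(x in A) (m x)%:E)%E.
Proof.
move=> Hm c0 cC [Hf Hcmp] A mA.
have C0 : 0 < C by apply: lt_trans cC.
have [mm m0 _] := Hm; have [mf f0 _] := Hf.
have Fm := @int_finnum R m Hm A mA; have Ff := @int_finnum R f Hf A mA.
apply/andP; split; rewrite -lee_fin EFinM !fineK //.
- rewrite -(@intZ m mm m0 c (ltW c0) A mA); apply: ge0_le_integral => //.
  all: try by move=> t _; rewrite lee_fin mulr_ge0 // ltW.
  all: try by apply/measurable_EFinP; apply: (measurable_funM (measurable_cst c)); apply: measurable_funS mm.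
  all: try by apply/measurable_EFinP; apply: (measurable_funM (measurable_cst C)); apply: measurable_funS mm.
  all: try by apply/measurable_EFinP; apply: measurable_funS mf.
  all: try by move=> t _; rewrite lee_fin; case: (Hcmp t).
- rewrite -(@intZ m mm m0 C (ltW C0) A mA); apply: ge0_le_integral => //.
  all: try by move=> t _; rewrite lee_fin.
  all: try by apply/measurable_EFinP; apply: measurable_funS mf.
  all: try by apply/measurable_EFinP; apply: (measurable_funM (measurable_cst c)); apply: measurable_funS mm.
  all: try by apply/measurable_EFinP; apply: (measurable_funM (measurable_cst C)); apply: measurable_funS mm.
  all: try by move=> t _; rewrite lee_fin; case: (Hcmp t).
Qed.
End Cmp.

Section LimExp.
Context {R : realType}.

Lemma lim_exp (u v B : R) (N0 : nat) : 0 <= B ->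
  (forall n : nat, (N0 <= n)%N -> u <= v * expR (B / n%:R)) -> u <= v.
Proof.
move=> B0 H; rewrite leNgt; apply/negP => vu.
have [v0|v0] := leP v 0.
  have := H N0 (leqnn _).
  have e1 : 1 <= expR (B / N0%:R) by rewrite -expR0 ler_expR divr_ge0.
  by nra.
set r := u / v.
have r1 : 1 < r by rewrite /r ltr_pdivlMr // mul1r.
have lr : 0 < ln r by apply: ln_gt0.
set N := maxn N0 (Num.trunc (B / ln r)).+1.
have NN : B / ln r < N%:R.
  apply: (lt_le_trans (truncnS_gt _)); rewrite ler_nat; exact: leq_maxr.
have Npos : 0 < N%:R :> R.
  by apply: le_lt_trans NN; rewrite divr_ge0 // ltW.
have k : B / N%:R < ln r.
  by rewrite ltr_pdivrMr // mulrC -ltr_pdivrMr.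
have := H N (leq_maxl _ _).
have : v * expR (B / N%:R) < u.
  have -> : u = v * r by rewrite /r mulrC divfK // gt_eqF.
  rewrite ltr_pM2l // -[X in _ < X]lnK ?ltr_expR //.
  by rewrite posrE (lt_trans _ r1).
by move=> h1 h2; move: (le_lt_trans h2 h1); rewrite ltxx.
Qed.

Lemma lim_exp2 (u v B : R) (N0 : nat) : 0 <= B ->
  (forall n : nat, (N0 <= n)%N -> v * expR (- (B / n%:R)) <= u) -> v <= u.
Proof.
move=> B0 H; apply: (lim_exp _ _ B N0) => // n Nn.
have := H n Nn; rewrite expRN ler_pdivrMr ?expR_gt0 // => h; exact: h.
Qed.
End LimExp.

Section Main.
Context {R : realType}.
Local Notation mu := (@lebesgue_measure R).
Variables (V : R -> R) (L CV c C : R) (m f T : R -> R).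
Hypothesis mE : forall x, m x = expR (- V x).
Hypothesis HL : lipschitz_with L V.
Hypothesis Hm : is_prob_density m.
Hypothesis CV0 : 0 < CV.
Hypothesis HCV : forall x : R,
  CV^-1 <= m x / Num.min (cdf_of m x) (upper_tail m x) <= CV.
Hypothesis c0 : 0 < c.
Hypothesis cC : c < C.
Hypothesis Hf : Pcc m c C f.
Hypothesis HT : forall x : R, cdf_of f (T x) = cdf_of m x.

Let C0 : 0 < C. Proof. exact: lt_trans cC. Qed.
Let Hfd : is_prob_density f. Proof. by case: Hf. Qed.
Let mm : measurable_fun setT m. Proof. by case: Hm. Qed.
Let mf : measurable_fun setT f. Proof. by case: Hfd. Qed.
Let m0 : forall x, 0 <= m x. Proof. by case: Hm. Qed.
Let f0 : forall x, 0 <= f x. Proof. by case: Hfd. Qed.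

Lemma L0 : 0 <= L.
Proof.
have := HL 0 1; rewrite sub0r normrN normr1 mulr1.
by apply: le_trans.
Qed.

Lemma mpos x : 0 < m x.
Proof. by rewrite mE expR_gt0. Qed.

Lemma mlip t a :
  m a * expR (- (L * `|t - a|)) <= m t <= m a * expR (L * `|t - a|).
Proof.
rewrite !mE -!expRD !ler_expR.
have := HL t a; rewrite ler_norml => /andP[h1 h2].
by apply/andP; split; lra.
Qed.

Lemma cdf_cmp x : c * cdf_of m x <= cdf_of f x <= C * cdf_of m x.
Proof. by apply: (@int_cmp R m f c C Hm c0 cC Hf). Qed.

Lemma upper_cmp x : c * upper_tail m x <= upper_tail f x <= C * upper_tail m x.
Proof. by apply: (@int_cmp R m f c C Hm c0 cC Hf). Qed.

Let Mn x := Num.min (cdf_of m x) (upper_tail m x).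

Lemma Mbnd x : 0 < Mn x /\ m x <= CV * Mn x /\ Mn x <= CV * m x.
Proof.
have M0 : 0 <= Mn x by rewrite le_min cdf_ge0 // upper_ge0.
have [H1 H2] := andP (HCV x).
have Mp : 0 < Mn x.
  rewrite lt_neqAle M0 andbT; apply/negP => /eqP M00.
  by move: H1; rewrite -/(Mn x) -M00 invr0 mulr0 leNgt invr_gt0 CV0.
split=> //; split.
  by rewrite -ler_pdivrMr.
move: H1; rewrite ler_pdivlMr // => h.
by have := ler_wpM2l (ltW CV0) h; rewrite mulrA mulfV ?gt_eqF // mul1r.
Qed.

Lemma upper_eq (g : R -> R) : is_prob_density g -> forall x,
  upper_tail g x = 1 - cdf_of g x.
Proof. by move=> Hg x; have := @cdf_upper R g Hg x; lra. Qed.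

Lemma ratio a : m a <= C * CV ^+ 2 * m (T a) /\ c * m (T a) <= CV ^+ 2 * m a.
Proof.
have [Ma [Ma1 Ma2]] := Mbnd a.
have [Mt [Mt1 Mt2]] := Mbnd (T a).
have [h1 h2] := andP (cdf_cmp (T a)).
have [h3 h4] := andP (upper_cmp (T a)).
have U : upper_tail m a = upper_tail f (T a).
  by rewrite (upper_eq _ Hm) (upper_eq _ Hfd) HT.
have MU : Mn a <= C * Mn (T a).
  rewrite /Mn minr_pMr ?(ltW C0) // le_min !ge_min.
  by rewrite -(HT a) h2 U h4 orbT.
have ML : c * Mn (T a) <= Mn a.
  rewrite /Mn minr_pMr ?(ltW c0) // le_min !ge_min.
  by rewrite -(HT a) h1 U h3 orbT.
split.
  apply: (le_trans Ma1).
  have -> : C * CV ^+ 2 * m (T a) = CV * (C * (CV * m (T a))) by rewrite expr2; ring.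
  rewrite ler_pM2l //; apply: (le_trans MU).
  by rewrite ler_pM2l.
have -> : CV ^+ 2 * m a = CV * (CV * m a) by rewrite expr2; ring.
apply: (@le_trans _ _ (CV * Mn a)); last by rewrite ler_pM2l.
apply: (@le_trans _ _ (CV * (c * Mn (T a)))); last by rewrite ler_pM2l.
have -> : CV * (c * Mn (T a)) = c * (CV * Mn (T a)) by ring.
by rewrite ler_pM2l.
Qed.

Let Im a b := fine (\int[mu]_(x in `]a, b]) (m x)%:E)%E.
Let If a b := fine (\int[mu]_(x in `]a, b]) (f x)%:E)%E.

Lemma mlo_hi a t b : a < t <= b ->
  m a * expR (- (L * (b - a))) <= m t <= m a * expR (L * (b - a)).
Proof.
move=> /andP[ha tb].
have ta : `|t - a| <= b - a by rewrite ger0_norm; lra.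
have hL : L * `|t - a| <= L * (b - a) by rewrite ler_wpM2l // L0.
have [h1 h2] := andP (mlip t a).
apply/andP; split.
  apply: le_trans h1; rewrite ler_pM2l ?mpos // ler_expR; lra.
apply: (le_trans h2); rewrite ler_pM2l ?mpos // ler_expR; lra.
Qed.

Lemma Im_bnd a b : a <= b ->
  (b - a) * (m a * expR (- (L * (b - a)))) <= Im a b
  <= (b - a) * (m a * expR (L * (b - a))).
Proof.
move=> ab; rewrite ![(b - a) * _]mulrC; apply: itv_bounds => //.
  by rewrite mulr_ge0 // ?(ltW (mpos a)) // ltW // expR_gt0.
by move=> t; apply: mlo_hi.
Qed.

Lemma If_bnd a b : a <= b ->
  (b - a) * (c * (m a * expR (- (L * (b - a))))) <= If a b
  <= (b - a) * (C * (m a * expR (L * (b - a)))).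
Proof.
move=> ab; rewrite ![(b - a) * _]mulrC; apply: itv_bounds => //.
  by rewrite !mulr_ge0 // ?(ltW c0) ?(ltW (mpos a)) // ltW // expR_gt0.
move=> t /mlo_hi /andP[h1 h2]; case: Hf => _ /(_ t) [k1 k2].
apply/andP; split.
  by apply: le_trans k1; rewrite ler_pM2l.
by apply: (le_trans k2); rewrite ler_pM2l.
Qed.

Lemma Ieq a b : a <= b -> T a <= T b -> Im a b = If (T a) (T b).
Proof.
move=> ab Tab.
have e1 := cdf_split _ Hm _ _ ab; have e2 := cdf_split _ Hfd _ _ Tab.
rewrite /Im /If; move: e1 e2; rewrite !HT; lra.
Qed.

Lemma Tmono a b : a <= b -> T a <= T b.
Proof.
rewrite le_eqVlt => /predU1P[-> //|ab].
rewrite leNgt; apply/negP => Tba.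
have e1 := cdf_split _ Hfd _ _ (ltW Tba); have e2 := cdf_split _ Hm _ _ (ltW ab).
have i0 : 0 <= If (T b) (T a).
  by apply: fine_ge0; apply: integral_ge0 => t _; rewrite lee_fin.
have [k1 _] := andP (Im_bnd _ _ (ltW ab)).
have pos : 0 < (b - a) * (m a * expR (- (L * (b - a)))).
  by rewrite !mulr_gt0 ?mpos ?expR_gt0 // subr_gt0.
move: e1 e2; rewrite !HT /If /Im in i0 k1 *; lra.
Qed.

Let K := C * CV ^+ 2 / c.

Lemma Kpos : 0 < K.
Proof. by rewrite /K !mulr_gt0 ?invr_gt0 ?exprn_gt0. Qed.

Lemma local_up a b : a < b ->
  T b - T a <= K * (b - a) * expR (L * ((b - a) + (T b - T a))).
Proof.
move=> ab; have Tab := Tmono _ _ (ltW ab).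
set h := b - a; set d := T b - T a.
have h0 : 0 < h by rewrite subr_gt0.
have d0 : 0 <= d by rewrite subr_ge0.
have e := Ieq _ _ (ltW ab) Tab.
have [_ k2] := andP (Im_bnd _ _ (ltW ab)).
have [k1 _] := andP (If_bnd _ _ Tab).
have [r1 _] := ratio a.
rewrite -/h -/d in k1 k2.
set P := m (T a) in k1 r1 *; set Q := m a in k2 r1 *.
have P0 : 0 < P by apply: mpos.
have Q0 : 0 < Q by apply: mpos.
set E := expR (L * d) in k1 *; set F := expR (L * h) in k2 *.
have E0 : 0 < E by apply: expR_gt0.
have F0 : 0 < F by apply: expR_gt0.
rewrite expRN -/E in k1.
have s1 : c * P * d <= Q * F * E * h.
  rewrite -e in k1; have := ler_wpM2r (ltW E0) (le_trans k1 k2).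
  have -> : d * (c * (P * E^-1)) * E = c * P * d by field; rewrite gt_eqF.
  have -> : h * (Q * F) * E = Q * F * E * h by ring.
  by [].
have s2 : Q * F * E * h <= C * CV ^+ 2 * P * F * E * h.
  rewrite -!(mulrA _ F) -!(mulrA _ (F * _)).
  by rewrite ler_wpM2r // !mulr_ge0 // ltW.
have s3 : c * d <= C * CV ^+ 2 * F * E * h.
  rewrite -(ler_pM2l P0).
  have -> : P * (C * CV ^+ 2 * F * E * h) = C * CV ^+ 2 * P * F * E * h by ring.
  by apply: le_trans s2; apply: le_trans s1; rewrite mulrA [P * c]mulrC.
rewrite (mulrDr L h d) expRD -/F -/E -(ler_pM2l c0).
have -> : c * (K * h * (F * E)) = C * CV ^+ 2 * F * E * h.
  by rewrite /K; field; rewrite gt_eqF.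
exact: s3.
Qed.

Lemma local_lo a b : a < b ->
  K^-1 * (b - a) * expR (- (L * ((b - a) + (T b - T a)))) <= T b - T a.
Proof.
move=> ab; have Tab := Tmono _ _ (ltW ab).
set h := b - a; set d := T b - T a.
have h0 : 0 < h by rewrite subr_gt0.
have d0 : 0 <= d by rewrite subr_ge0.
have e := Ieq _ _ (ltW ab) Tab.
have [k2 _] := andP (Im_bnd _ _ (ltW ab)).
have [_ k1] := andP (If_bnd _ _ Tab).
have [_ r2] := ratio a.
rewrite -/h -/d in k1 k2.
set P := m (T a) in k1 r2 *; set Q := m a in k2 r2 *.
have P0 : 0 < P by apply: mpos.
have Q0 : 0 < Q by apply: mpos.
set E := expR (L * d) in k1 *; set F := expR (L * h) in k2 *.
have E0 : 0 < E by apply: expR_gt0.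
have F0 : 0 < F by apply: expR_gt0.
rewrite expRN -/F in k2.
have t1 : Q * h <= C * P * E * F * d.
  rewrite e in k2; have := ler_wpM2r (ltW F0) (le_trans k2 k1).
  have -> : h * (Q * F^-1) * F = Q * h by field; rewrite gt_eqF.
  have -> : d * (C * (P * E)) * F = C * P * E * F * d by ring.
  by [].
have t2 : c * (Q * h) <= Q * (C * CV ^+ 2 * E * F * d).
  apply: (le_trans (ler_wpM2l (ltW c0) t1)).
  have -> : c * (C * P * E * F * d) = (C * E * F * d) * (c * P) by ring.
  have -> : Q * (C * CV ^+ 2 * E * F * d) = (C * E * F * d) * (CV ^+ 2 * Q) by ring.
  by rewrite ler_wpM2l // !mulr_ge0 // ltW.
have t3 : c * h <= C * CV ^+ 2 * E * F * d.
  by rewrite -(ler_pM2l Q0); apply: le_trans t2; rewrite mulrCA.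
have KFE : 0 < C * CV ^+ 2 * F * E by rewrite !mulr_gt0 // exprn_gt0.
rewrite expRN (mulrDr L h d) expRD -/F -/E -(ler_pM2l KFE).
have -> : C * CV ^+ 2 * F * E * (K^-1 * h * (F * E)^-1) = c * h.
  by rewrite /K; field; rewrite !gt_eqF.
by apply: (le_trans t3); rewrite le_eqVlt; apply/orP; left; apply/eqP; ring.
Qed.

Lemma part x y (xy : x < y) (n : nat) (n0 : (0 < n)%N)
  (hle1 : (y - x) / n%:R <= 1) (j : nat) : (j <= n)%N ->
  T (x + j%:R * ((y - x) / n%:R)) - T x <=
    j%:R * (K * ((y - x) / n%:R) * expR (L * (1 + K * expR (L * (1 + (T y - T x))))
                                  * ((y - x) / n%:R))) /\
  j%:R * (K^-1 * ((y - x) / n%:R) * expR (- (L * (1 + K * expR (L * (1 + (T y - T x))))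
                                  * ((y - x) / n%:R)))) <=
    T (x + j%:R * ((y - x) / n%:R)) - T x.
Proof.
set h := (y - x) / n%:R; set D := T y - T x.
set M := expR (L * (1 + D)).
set A := L * (1 + K * M).
have nR0 : 0 < n%:R :> R by rewrite ltr0n.
have h0 : 0 < h by rewrite divr_gt0 // subr_gt0.
have nh : n%:R * h = y - x by rewrite /h; field; rewrite gt_eqF.
have M0 : 0 < M by apply: expR_gt0.
have K0 := Kpos.
have hh1 : h <= 1 by exact: hle1.
elim: j => [_|j IH jn].
  by rewrite mulr0n !mul0r addr0 subrr; split.
set a := x + j%:R * h; set b := x + j.+1%:R * h.
have [IH1 IH2] := IH (ltnW jn).
rewrite -/a in IH1 IH2.
have ba : b - a = h by rewrite /a /b -natr1; ring.
have ab : a < b by rewrite -subr_gt0 ba.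
have xa : x <= a by rewrite /a lerDl mulr_ge0 ?ler0n ?ltW.
have bley : b <= y.
  rewrite /b -[y](subrK x) -nh addrC lerD2r (ler_pM2r h0) ler_nat.
  exact: jn.
have Txa := Tmono _ _ xa; have Tby := Tmono _ _ bley.
have Tab := Tmono _ _ (ltW ab).
set d := T b - T a.
have d0 : 0 <= d by rewrite subr_ge0.
have dD : d <= D by rewrite /d /D; lra.
have up := local_up _ _ ab; have lo := local_lo _ _ ab.
rewrite ba -/d in up lo.
have LhdM : L * (h + d) <= L * (1 + D) by apply: ler_wpM2l; [exact: L0 | lra].
have dM : d <= K * h * M.
  apply: (le_trans up); apply: ler_wpM2l; first by rewrite mulr_ge0 // ltW.
  by rewrite /M ler_expR.
have LA : L * (h + d) <= A * h.
  have -> : A * h = L * (h + K * h * M) by rewrite /A; ring.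
  by apply: ler_wpM2l; [exact: L0 | rewrite lerD2l].
have dup : d <= K * h * expR (A * h).
  apply: (le_trans up); apply: ler_wpM2l; first by rewrite mulr_ge0 // ltW.
  by rewrite ler_expR.
have dlo : K^-1 * h * expR (- (A * h)) <= d.
  apply: le_trans lo; apply: ler_wpM2l.
    by rewrite mulr_ge0 // ?invr_ge0 ltW.
  by rewrite ler_expR lerN2.
have -> : T b - T x = (T a - T x) + d by rewrite /d; ring.
rewrite -natr1 !mulrDl !mul1r.
split; lra.
Qed.

Lemma glob x y : x < y -> K^-1 * (y - x) <= T y - T x <= K * (y - x).
Proof.
move=> xy.
set D := T y - T x; set M := expR (L * (1 + D)).
set A := L * (1 + K * M).
have K0 := Kpos.
have A0 : 0 <= A by rewrite mulr_ge0 ?L0 // addr_ge0 // mulr_ge0 ?ltW // expR_gt0.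
have yx0 : 0 < y - x by rewrite subr_gt0.
have B0 : 0 <= A * (y - x) by rewrite mulr_ge0 // ltW.
set N0 := (Num.trunc (y - x)).+1.
have hyp n : (N0 <= n)%N -> [/\ (0 < n)%N, 0 < n%:R :> R & (y - x) / n%:R <= 1].
  move=> Nn; have n0 : (0 < n)%N by apply: leq_trans Nn.
  have nR : 0 < n%:R :> R by rewrite ltr0n.
  split => //; rewrite ler_pdivrMr // mul1r.
  apply: ltW; apply: (lt_le_trans (truncnS_gt _)); rewrite ler_nat; exact: Nn.
have nh n : (0 < n)%N -> n%:R * ((y - x) / n%:R) = y - x.
  by move=> n0; rewrite mulrC divfK // pnatr_eq0 -lt0n.
have eqn n : (0 < n)%N -> x + n%:R * ((y - x) / n%:R) = y.
  by move=> n0; rewrite nh // addrC subrK.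
apply/andP; split.
- apply: (lim_exp2 _ _ (A * (y - x)) N0) => // n Nn.
  have [n0 nR h1] := hyp n Nn.
  have [_ P2] := @part x y xy n n0 h1 n (leqnn n).
  rewrite eqn // -/D -/M -/A in P2.
  set hh := (y - x) / n%:R in P2.
  have -> : A * (y - x) / n%:R = A * hh by rewrite /hh mulrA.
  rewrite -(nh n n0) -/hh.
  have -> : K^-1 * (n%:R * hh) * expR (- (A * hh)) =
    n%:R * (K^-1 * hh * expR (- (A * hh))) by ring.
  exact: P2.
- apply: (lim_exp _ _ (A * (y - x)) N0) => // n Nn.
  have [n0 nR h1] := hyp n Nn.
  have [P1 _] := @part x y xy n n0 h1 n (leqnn n).
  rewrite eqn // -/D -/M -/A in P1.
  set hh := (y - x) / n%:R in P1.
  have -> : A * (y - x) / n%:R = A * hh by rewrite /hh mulrA.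
  rewrite -(nh n n0) -/hh.
  have -> : K * (n%:R * hh) * expR (A * hh) =
    n%:R * (K * hh * expR (A * hh)) by ring.
  exact: P1.
Qed.

Lemma deriv_bnd x : derivable T x 1 -> K^-1 <= derive1 T x <= K.
Proof.
move=> dT; rewrite derive1E.
have K0 := Kpos.
have key h : h != 0 -> K^-1 <= h^-1 * (T (h + x) - T x) <= K.
  move=> hn0; have [hneg|hpos] := ltP h 0.
    have hx : h + x < x by lra.
    have /andP[g1 g2] := glob _ _ hx.
    have e : h^-1 * (T (h + x) - T x) = (x - (h + x))^-1 * (T x - T (h + x)).
      by rewrite (_ : x - (h + x) = - h) ?invrN ?mulNr -?mulrN ?opprB //; ring.
    have hp : 0 < x - (h + x) by lra.
    rewrite e; apply/andP; split.
      by rewrite ler_pdivlMl // mulrC.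
    by rewrite ler_pdivrMl // mulrC.
  have hp : 0 < h by rewrite lt_neqAle eq_sym hn0 hpos.
  have hx : x < h + x by lra.
  have /andP[g1 g2] := glob _ _ hx.
  rewrite (addrK x h) in g1 g2.
  apply/andP; split.
    by rewrite ler_pdivlMl // mulrC.
  by rewrite ler_pdivrMl // mulrC.
apply/andP; split.
- apply: limr_ge => //; near=> h.
  have hn0 : h != 0 by near: h; exact: nbhs_dnbhs_neq.
  have /andP[+ _] := key h hn0.
  have e : h%:A = h := mulr1 h.
  by rewrite /= e.
- apply: limr_le => //; near=> h.
  have hn0 : h != 0 by near: h; exact: nbhs_dnbhs_neq.
  have /andP[_ +] := key h hn0.
  have e : h%:A = h := mulr1 h.
  by rewrite /= e.
Unshelve. all: end_near.
Qed.

Lemma main_sec :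
  (forall x y : R, x < y ->
     c / (C * CV ^+ 2) * (y - x) <= T y - T x <= C * CV ^+ 2 / c * (y - x)) /\
  (forall x : R, derivable T x 1 ->
     c / (C * CV ^+ 2) <= derive1 T x <= C * CV ^+ 2 / c).
Proof.
have e : c / (C * CV ^+ 2) = K^-1 by rewrite /K invf_div.
rewrite e; split; [exact: glob | exact: deriv_bnd].
Qed.
End Main.

Theorem lemma2p6 (R : realType) (V : R -> R) (L CV c C : R) (f T : R -> R) :
  convex_fun V ->
  lipschitz_with L V ->
  is_prob_density (fun x => expR (- V x)) ->
  0 < CV ->
  (forall x : R,
     CV^-1 <= expR (- V x) / Num.min (cdf_of (fun t => expR (- V t)) x)
                                      (upper_tail (fun t => expR (- V t)) x)
     <= CV) ->
  0 < c -> c < C ->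
  Pcc (fun x => expR (- V x)) c C f ->
  (forall x : R, cdf_of f (T x) = cdf_of (fun t => expR (- V t)) x) ->
  (forall x y : R, x < y ->
     c / (C * CV ^+ 2) * (y - x) <= T y - T x <= C * CV ^+ 2 / c * (y - x)) /\
  (forall x : R, derivable T x 1 ->
     c / (C * CV ^+ 2) <= derive1 T x <= C * CV ^+ 2 / c).
Proof.
move=> _ HL Hm CV0 HCV c0 cC Hf HT.
by apply: (@main_sec R V L CV c C (fun x => expR (- V x)) f T).
Qed.
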